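(* Let $X,Y$ be compact metric spaces, $(f_n)_{n\ge1}$ a sequence of continuous maps $X\to X$ and $(g_n)_{n\ge1}$ a sequence of continuous maps $Y\to Y$, and suppose there is a continuous surjection $h\colon X\to Y$ with $g_n\circ h=h\circ f_n$ for all $n$ (topological semi-conjugacy). Then $E(Y,g_{1,\infty})$ is a continuous image of $E(X,f_{1,\infty})$. If moreover $h$ is a homeomorphism, then $E(Y,g_{1,\infty})$ and $E(X,f_{1,\infty})$ are topologically isomorphic, i.e. there is a homeomorphism $H\colon E(X,f_{1,\infty})\to E(Y,g_{1,\infty})$ with $H(f_1^p)=g_1^p$ for every $p\in\beta(\mathbb{N})$.
   Context: $\mathbb{N}=\{1,2,\dots\}$, $\beta(\mathbb{N})$ the ultrafilters on $\mathbb{N}$ (principal ones identified with $n\in\mathbb{N}$), $\mathbb{N}^*$ the free ones. For $r\in\mathbb{N}^*$, $r\text{-}\lim_n x_n$ is the unique $y$ with $\{n:x_n\in V\}\in r$ for all neighbourhoods $V$ of $y$. $f_1^n=f_n\circ\cdots\circ f_1$, $f_1^r(x)=r\text{-}\lim_n f_1^n(x)$ for $r\in\mathbb{N}^*$, and $E(X,f_{1,\infty})$ is the closure of $\{f_1^n:n\in\mathbb{N}\}$ in $X^X$ with the pointwise topology (it equals $\{f_1^p:p\in\beta(\mathbb{N})\}$); similarly for $g$. The semigroup operation on these sets is $f_1^p\ast f_1^q:=f_1^{q+p}$, where $q+p=\{A:\{n:\{m:m+n\in A\}\in q\}\in p\}$, so an isomorphism is a homeomorphism compatible with this indexing. *)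

(* Defs.v *)
From HB Require Import structures.
From mathcomp Require Import all_boot all_order all_algebra.
From mathcomp Require Import all_classical all_reals.
From mathcomp Require Import topology.
Set Implicit Arguments. Unset Strict Implicit. Unset Printing Implicit Defensive.
Import Order.TTheory GRing.Theory Num.Theory.
Local Open Scope classical_set_scope.

(* Indexing convention: the paper's sequence (f_k)_{k>=1} is represented by
   f : nat -> X -> X with f_k = f (k-1).  Then
   fcomp f n = f n \o ... \o f 0 = f_{n+1} \o ... \o f_1 = f_1^{n+1}. *)
Fixpoint fcomp (X : Type) (f : nat -> X -> X) (n : nat) : X -> X :=
  match n with
  | 0 => f 0
  | m.+1 => f m.+1 \o fcomp f m
  end.

Definition Env (X : topologicalType) (f : nat -> X -> X) : set {ptws X -> X} :=
  closure (range (fun n => (fcomp f n : {ptws X -> X}))).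

(* "F = f_1^p" for an ultrafilter p on N, where f_1^p(x) = p-lim_n f_1^n(x)
   (the p-limit is unique since X is Hausdorff).  Ultrafilters p on nat
   correspond to ultrafilters on N = {1,2,...} via the shift n |-> n+1;
   principal p at n gives fcomp f n = f_1^{n+1}. *)
Definition is_fpow (X : topologicalType) (f : nat -> X -> X) (p : set_system nat)
  (F : X -> X) : Prop :=
  forall x : X, (fun n => fcomp f n x) @ p --> F x.

(* Main.v *)
Require Import Defs.
From HB Require Import structures.
From mathcomp Require Import all_boot all_order all_algebra.
From mathcomp Require Import all_classical all_reals.
From mathcomp Require Import topology.
Local Open Scope classical_set_scope.

Lemma fcomp_comm (X Y : Type) (f : nat -> X -> X) (g : nat -> Y -> Y) (h : X -> Y) :
  (forall n, g n \o h = h \o f n) -> forall n x, fcomp g n (h x) = h (fcomp f n x).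
Proof.
move=> hc; elim=> [|n IH] x /=; first by have := congr1 (fun F => F x) (hc 0).
by rewrite IH; have := congr1 (fun F => F (fcomp f n x)) (hc n.+1).
Qed.

Lemma conj_cont (A : topologicalType) (B : uniformType) (a : B -> A) (b : A -> B) :
  continuous b ->
  continuous (fun F : {ptws A -> A} => (b \o F \o a : {ptws B -> B})).
Proof.
move=> bc F; apply: (proj2 (@pointwise_cvgP _ _ _ _ (fmap_filter _ (@nbhs_filter {ptws A -> A} F)))) => y.
apply: (cvg_comp _ _ (@proj_continuous A (fun=> A) (a y) F)); exact: bc.
Qed.

Lemma image_closure_sub (T U : topologicalType) (phi : T -> U) {A : set T} :
  continuous phi -> phi @` closure A `<=` closure (phi @` A).
Proof.
move=> pc _ [x cx <-] C /pc nC.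
have [a [Aa Ca]] := cx _ nC.
by exists (phi a); split => //; exists a.
Qed.

Lemma image_env (X Y : topologicalType) (f : nat -> X -> X) (g : nat -> Y -> Y)
  (phi : {ptws X -> X} -> {ptws Y -> Y}) :
  continuous phi -> (forall n, phi (fcomp f n) = fcomp g n) ->
  phi @` Env f `<=` Env g.
Proof.
move=> pc pe; rewrite /Env; move=> G /(@image_closure_sub _ _ _ _ pc); move: G.
apply: closure_subset => _ [_ [n _ <-] <-].
by exists n => //; rewrite pe.
Qed.

Theorem theorem3p16 (R : realType) (X Y : metricType R)
  (f : nat -> X -> X) (g : nat -> Y -> Y) (h : X -> Y) :
  compact [set: X] -> compact [set: Y] ->
  (forall n, continuous (f n)) -> (forall n, continuous (g n)) ->
  continuous h -> (forall y : Y, exists x : X, h x = y) ->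
  (forall n, g n \o h = h \o f n) ->
  (exists H : {ptws X -> X} -> {ptws Y -> Y},
      {within Env f, continuous H} /\ H @` Env f = Env g) /\
  ((exists k : Y -> X, continuous k /\ cancel h k /\ cancel k h) ->
   exists (H : {ptws X -> X} -> {ptws Y -> Y}) (K : {ptws Y -> Y} -> {ptws X -> X}),
     [/\ {within Env f, continuous H}, {within Env g, continuous K},
         H @` Env f `<=` Env g /\ K @` Env g `<=` Env f,
         {in Env f, cancel H K} /\ {in Env g, cancel K H} &
         forall (p : set_system nat) (F : {ptws X -> X}), UltraFilter p ->
           is_fpow f p F -> is_fpow g p (H F)]).
Proof.
move=> cX cY fc gc hc hs hcomm.
have fcc := @fcomp_comm _ _ _ _ _ hcomm.
split.
  pose s y := projT1 (cid (hs y)).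
  have hsK y : h (s y) = y by rewrite /s; case: cid.
  pose H := fun F : {ptws X -> X} => (h \o F \o s : {ptws Y -> Y}).
  have Hc : continuous H by exact: (@conj_cont _ _ _ _ hc).
  have He n : H (fcomp f n) = fcomp g n.
    by apply: funext => y; rewrite /H /= -fcc hsK.
  exists H; split; first exact: continuous_subspaceT.
  apply/seteqP; split; first exact: image_env.
  have cptT : compact [set: {ptws X -> X}].
    apply: (@subclosed_compact _ setT [set F : {ptws X -> X} | forall i, setT (F i)]) => //.
    exact: (@tychonoff X (fun _ => X) (fun _ => setT) (fun _ => cX)).
  have cE : compact (H @` Env f).
    apply: continuous_compact; first exact: continuous_subspaceT.
    by apply: (subclosed_compact _ cptT) => //; exact: closed_closure.
  have clE : closed (H @` Env f).
    by apply: compact_closed => //; apply: hausdorff_product => _; exact: metric_hausdorff.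
  rewrite /Env closureE; apply: smallest_sub => // _ [n _ <-].
  exists (fcomp f n); last exact: He.
  by apply: subset_closure; exists n.
move=> [k [kc [hk kh]]].
pose H := fun F : {ptws X -> X} => (h \o F \o k : {ptws Y -> Y}).
pose K := fun G : {ptws Y -> Y} => (k \o G \o h : {ptws X -> X}).
have Hc : continuous H by exact: (@conj_cont _ _ _ _ hc).
have Kc : continuous K by exact: (@conj_cont _ _ _ _ kc).
have gcomm n : fcomp g n = h \o fcomp f n \o k.
  by apply: funext => y /=; rewrite -fcc kh.
exists H, K; split.
- exact: continuous_subspaceT.
- exact: continuous_subspaceT.
- split; apply: image_env => // n; apply: funext => y /=;
    by rewrite /K /H /= ?gcomm /= ?hk ?kh.
- split=> F _; apply: funext => x /=; by rewrite /K /H /= ?hk ?kh.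
- move=> p F pU pF y.
  have -> : (fun n => fcomp g n y) = h \o (fun n => fcomp f n (k y)).
    by apply: funext => n; rewrite gcomm.
  apply: (cvg_comp _ _ (pF (k y))); exact: hc.
Qed.
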